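(* (1) If $q$ is even, then $\mathcal S_1$ consists of Type II points, the pencil $T\mathcal S_1$ consists of Type II lines, and $\mathcal S_1=\mathrm{Pr}(\mathcal P_{2,q})=\mathrm{Sp}(\mathcal P_{2,q})$. (2) If $q$ is odd, then: (a) $\mathcal S_1$ consists of Type III points, $T\mathcal S_1$ consists of Type II lines, and $\mathcal S_1=\mu_{\mathrm{line}}(\Pi_{-1})=\mathrm{Pr}(\mathcal P_{2,q})=\mathrm{Pr}(\Pi_{-1})$; (b) $\mathcal S_{-1}$ consists of Type II points, $T\mathcal S_{-1}$ consists of Type III lines, and $\mathcal S_{-1}=\mathrm{Sp}(\mu_{\mathrm{pt}}(\Pi_{-1}))=\mathrm{Sp}(\mathcal P_{2,q})=\mathrm{Sp}(\Pi_{-1})$.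
   Context: Let $q$ be a prime power, $\mathbb{F}_{q^3}^*=\mathbb{F}_{q^3}\setminus\{0\}$. Points of $\mathrm{PG}(2,q^3)$ have homogeneous coordinates $(x,y,z)$ and lines $[a,b,c]$. Let $\phi$ be the collineation $(x,y,z)\mapsto(z^q,x^q,y^q)$ (on lines $[d,e,f]\mapsto[f^q,d^q,e^q]$), whose fixed points form the subplane $\mathcal P_{2,q}=\{(x,x^q,x^{q^2}):x\in\mathbb{F}_{q^3}^*\}$. A point has Type I, II, III according as its $\phi$-orbit is one point, three collinear points, three non-collinear points; a line has Type I, II, III according as its $\phi$-orbit is one line, three concurrent lines, three non-concurrent lines. $\mu_{\mathrm{pt}}$ sends a Type III point $P$ to the line $P^\phi P^{\phi^2}$, $\mu_{\mathrm{line}}$ sends a Type III line $\ell$ to the point $\ell^\phi\cap\ell^{\phi^2}$; for a subplane $\mathcal B$ these are applied elementwise to its points, respectively its lines (lines meeting $\mathcal B$ in $q+1$ points). Let $T=(0,0,1)$ and $m_T$ the line $[0,0,1]$. For $\theta\in\mathbb{F}_{q^3}^*$, $\mathcal S_\theta=\{(x\theta,x^q,0):x\in\mathbb{F}_{q^3}^*\}$, $T\mathcal S_\theta=\{TX:X\in\mathcal S_\theta\}$, and $\Pi_\theta=\{(r\theta^{q+1},r^q,r^{q^2}\theta):r\in\mathbb{F}_{q^3}^*\}$ (a subplane of order $q$). For a subplane $\mathcal B$, $\mathrm{Pr}(\mathcal B)=\{TP\cap m_T:P\in\mathcal B\}$ and $\mathrm{Sp}(\mathcal B)=\{\ell\cap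 m_T:\ell\text{ a line of }\mathcal B\}$; for a set $\mathcal L$ of lines not equal to $m_T$, $\mathrm{Sp}(\mathcal L)=\{\ell\cap m_T:\ell\in\mathcal L\}$. *)

(* Defs.v *)
From HB Require Import structures.
From mathcomp Require Import all_boot all_order all_algebra all_field.
Set Implicit Arguments. Unset Strict Implicit. Unset Printing Implicit Defensive.
Import Order.TTheory GRing.Theory Num.Theory.
Local Open Scope ring_scope.

Section PG2.
Variable F : finFieldType.

Definition vec3 := (F * F * F)%type.

Definition pnorm (v : vec3) : vec3 :=
  let: (x, y, z) := v in
  if x != 0 then (1, y / x, z / x)
  else if y != 0 then (0, 1, z / y)
  else if z != 0 then (0, 0, 1)
  else (0, 0, 0).

(* elements of PG(2,F): normalized nonzero triples.  Points and lines are both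
   represented by such triples (homogeneous coordinates (x,y,z), resp. [a,b,c]). *)
Definition proj := {v : vec3 | (v != (0, 0, 0)) && (pnorm v == v)}.
Definition point := proj.
Definition line := proj.

Lemma pT_proof : ((0, 0, 1) != ((0, 0, 0) : vec3)) && (pnorm (0, 0, 1) == (0, 0, 1)).
Proof. by rewrite /pnorm eqxx /= oner_eq0 /= !xpair_eqE /= !eqxx oner_eq0. Qed.

Definition pT : point := exist _ (0, 0, 1) pT_proof.
Definition mT : line := exist _ (0, 0, 1) pT_proof.

Definition mk (v : vec3) : proj := insubd pT (pnorm v).

Definition dot (u v : vec3) : F :=
  let: (x, y, z) := u in let: (a, b, c) := v in a * x + b * y + c * z.

Definition inc (P : point) (l : line) : bool := dot (val P) (val l) == 0.

Definition cross (u v : vec3) : vec3 :=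
  let: (x1, y1, z1) := u in let: (x2, y2, z2) := v in
  (y1 * z2 - z1 * y2, z1 * x2 - x1 * z2, x1 * y2 - y1 * x2).

Definition join (P Q : point) : line := mk (cross (val P) (val Q)).
Definition meet (l m : line) : point := mk (cross (val l) (val m)).

Variable q : nat.

Definition phiv (v : vec3) : vec3 :=
  let: (x, y, z) := v in (z ^+ q, x ^+ q, y ^+ q).
Definition phi_pt (P : point) : point := mk (phiv (val P)).
Definition phi_line (l : line) : line := mk (phiv (val l)).

Definition collinear (P Q R : point) : bool :=
  [exists l : line, [&& inc P l, inc Q l & inc R l]].
Definition concurrent (l m n : line) : bool :=
  [exists P : point, [&& inc P l, inc P m & inc P n]].

Definition typeI_pt (P : point) : bool := phi_pt P == P.
Definition typeII_pt (P : point) : bool :=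
  (phi_pt P != P) && collinear P (phi_pt P) (phi_pt (phi_pt P)).
Definition typeIII_pt (P : point) : bool :=
  ~~ collinear P (phi_pt P) (phi_pt (phi_pt P)).

Definition typeI_line (l : line) : bool := phi_line l == l.
Definition typeII_line (l : line) : bool :=
  (phi_line l != l) && concurrent l (phi_line l) (phi_line (phi_line l)).
Definition typeIII_line (l : line) : bool :=
  ~~ concurrent l (phi_line l) (phi_line (phi_line l)).

Definition mu_pt (P : point) : line := join (phi_pt P) (phi_pt (phi_pt P)).
Definition mu_line (l : line) : point := meet (phi_line l) (phi_line (phi_line l)).

Definition P2q : {set point} :=
  [set mk (x, x ^+ q, x ^+ (q ^ 2)) | x in [set x : F | x != 0]].

Definition Sth (th : F) : {set point} :=
  [set mk (x * th, x ^+ q, 0) | x in [set x : F | x != 0]].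

Definition TS (th : F) : {set line} := [set join pT X | X in Sth th].

Definition Pith (th : F) : {set point} :=
  [set mk (r * th ^+ q.+1, r ^+ q, r ^+ (q ^ 2) * th) | r in [set r : F | r != 0]].

Definition lines_of (B : {set point}) : {set line} :=
  [set l : line | #|[set P in B | inc P l]| == q.+1].

Definition Pr (B : {set point}) : {set point} := [set meet (join pT P) mT | P in B].
Definition SpL (L : {set line}) : {set point} := [set meet l mT | l in L].
Definition Sp (B : {set point}) : {set point} := SpL (lines_of B).

Definition mu_pt_set (B : {set point}) : {set line} := [set mu_pt P | P in B].
Definition mu_line_set (B : {set point}) : {set point} :=
  [set mu_line l | l in lines_of B].

End PG2.

Arguments pnorm : clear implicits.
Arguments mk : clear implicits.
Arguments dot : clear implicits.
Arguments inc : clear implicits.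
Arguments cross : clear implicits.
Arguments join : clear implicits.
Arguments meet : clear implicits.
Arguments phiv : clear implicits.
Arguments phi_pt : clear implicits.
Arguments phi_line : clear implicits.
Arguments collinear : clear implicits.
Arguments concurrent : clear implicits.
Arguments typeI_pt : clear implicits.
Arguments typeII_pt : clear implicits.
Arguments typeIII_pt : clear implicits.
Arguments typeI_line : clear implicits.
Arguments typeII_line : clear implicits.
Arguments typeIII_line : clear implicits.
Arguments mu_pt : clear implicits.
Arguments mu_line : clear implicits.
Arguments P2q : clear implicits.
Arguments Sth : clear implicits.
Arguments TS : clear implicits.
Arguments Pith : clear implicits.
Arguments lines_of : clear implicits.
Arguments Pr : clear implicits.
Arguments SpL : clear implicits.
Arguments Sp : clear implicits.
Arguments mu_pt_set : clear implicits.
Arguments mu_line_set : clear implicits.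
Arguments pT : clear implicits.
Arguments mT : clear implicits.

(* Main.v *)
Require Import Defs.
From HB Require Import structures.
From mathcomp Require Import all_boot all_order all_algebra all_field.
From mathcomp Require Import ring zify.
Set Implicit Arguments. Unset Strict Implicit. Unset Printing Implicit Defensive.
Import GRing.Theory.
Local Open Scope ring_scope.


Section Basic.
Variable F : finFieldType.

Definition scale (c : F) (v : vec3 F) : vec3 F :=
  let: (x, y, z) := v in (c * x, c * y, c * z).

Lemma triple_eq (a b c a' b' c' : F) : a = a' -> b = b' -> c = c' ->
  ((a, b, c) : vec3 F) = (a', b', c').
Proof. by move=> -> -> ->. Qed.

Lemma pnorm_scale c (v : vec3 F) : c != 0 -> pnorm F (scale c v) = pnorm F v.
Proof.
case: v => [[x y] z] c0 /=; rewrite /pnorm !mulf_eq0 (negbTE c0) /=.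
case: (eqVneq x 0) => [->|x0] /=.
  case: (eqVneq y 0) => [->|y0] /=.
    by [].
  by apply: triple_eq => //; field; rewrite ?c0 ?x0 ?y0.
by apply: triple_eq => //; field; rewrite ?c0 ?x0.
Qed.

Lemma mk_scale c (v : vec3 F) : c != 0 -> mk F (scale c v) = mk F v.
Proof. by move=> c0; rewrite /mk pnorm_scale. Qed.

Lemma pnorm_lin (v : vec3 F) : v != (0, 0, 0) ->
  exists2 c, c != 0 & pnorm F v = scale c v.
Proof.
case: v => [[x y] z]; rewrite /pnorm.
case: (eqVneq x 0) => [->|x0] /=.
  case: (eqVneq y 0) => [->|y0] /=.
    case: (eqVneq z 0) => [->|z0] /=; first by rewrite eqxx.
    move=> _; exists z^-1; first by rewrite invr_eq0.
    by apply: triple_eq; rewrite ?mulr0 ?mulVf.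
  move=> _; exists y^-1; first by rewrite invr_eq0.
  by apply: triple_eq; rewrite ?mulr0 ?mulVf // mulrC.
move=> _; exists x^-1; first by rewrite invr_eq0.
by apply: triple_eq; rewrite ?mulr0 ?mulVf // mulrC.
Qed.

Lemma pnorm_ok (v : vec3 F) : v != (0, 0, 0) ->
  (pnorm F v != (0, 0, 0)) && (pnorm F (pnorm F v) == pnorm F v).
Proof.
move=> v0; have [c c0 e] := pnorm_lin v0.
rewrite e pnorm_scale // e eqxx andbT.
by case: v v0 {e} => [[x y] z] /=; rewrite !xpair_eqE !mulf_eq0 (negbTE c0) /=.
Qed.

Lemma val_mk (v : vec3 F) : v != (0, 0, 0) -> val (mk F v) = pnorm F v.
Proof. by move=> v0; rewrite /mk val_insubd pnorm_ok. Qed.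

Lemma val_mk_lin (v : vec3 F) : v != (0, 0, 0) ->
  exists2 c, c != 0 & val (mk F v) = scale c v.
Proof. by move=> v0; rewrite val_mk //; apply: pnorm_lin. Qed.

Lemma mk_val (P : proj F) : mk F (val P) = P.
Proof.
apply: val_inj; case: P => v /= /andP [v0 /eqP nv].
by rewrite val_mk // nv.
Qed.

Lemma val_nz (P : proj F) : val P != (0, 0, 0).
Proof. by case: P => v /= /andP []. Qed.


Notation vz := ((0, 0, 0) : vec3 F).

Lemma cross_scale c d (a b : vec3 F) :
  cross F (scale c a) (scale d b) = scale (c * d) (cross F a b).
Proof.
case: a => [[a1 a2] a3]; case: b => [[b1 b2] b3] /=.
by apply: triple_eq; ring.
Qed.

Lemma dot_scale c d (a b : vec3 F) :
  dot F (scale c a) (scale d b) = c * d * dot F a b.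
Proof.
case: a => [[a1 a2] a3]; case: b => [[b1 b2] b3] /=; ring.
Qed.

Lemma dotC (a b : vec3 F) : dot F a b = dot F b a.
Proof. case: a => [[a1 a2] a3]; case: b => [[b1 b2] b3] /=; ring. Qed.

Lemma scale1 (a : vec3 F) : scale 1 a = a.
Proof. by case: a => [[a1 a2] a3] /=; rewrite !mul1r. Qed.

Lemma scale_nz c (a : vec3 F) : c != 0 -> a != vz -> scale c a != vz.
Proof.
case: a => [[a1 a2] a3] /= c0; rewrite !xpair_eqE !mulf_eq0 (negbTE c0) /=.
by [].
Qed.

Lemma nz1 (a b c : F) : a != 0 -> ((a, b, c) : vec3 F) != vz.
Proof. by move=> a0; rewrite !xpair_eqE (negbTE a0). Qed.
Lemma nz2 (a b c : F) : b != 0 -> ((a, b, c) : vec3 F) != vz.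
Proof. by move=> b0; rewrite !xpair_eqE (negbTE b0) andbF. Qed.
Lemma nz3 (a b c : F) : c != 0 -> ((a, b, c) : vec3 F) != vz.
Proof. by move=> c0; rewrite !xpair_eqE (negbTE c0) andbF. Qed.

Lemma mk_eq_scale c (a b : vec3 F) : c != 0 -> b = scale c a -> mk F b = mk F a.
Proof. by move=> c0 ->; rewrite mk_scale. Qed.

Lemma scale_of (ai bi a1 a2 a3 b1 b2 b3 : F) : ai != 0 ->
  ai * b1 = bi * a1 -> ai * b2 = bi * a2 -> ai * b3 = bi * a3 ->
  ((b1, b2, b3) : vec3 F) != vz ->
  bi != 0 /\ ((b1, b2, b3) : vec3 F) = scale (bi / ai) (a1, a2, a3).
Proof.
move=> ai0 h1 h2 h3 b0; split.
  apply/negP => /eqP bi0; move: h1 h2 h3 b0; rewrite bi0 !mul0r.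
  move/eqP; rewrite mulf_eq0 (negbTE ai0) /= => /eqP ->.
  move/eqP; rewrite mulf_eq0 (negbTE ai0) /= => /eqP ->.
  move/eqP; rewrite mulf_eq0 (negbTE ai0) /= => /eqP ->.
  by rewrite eqxx.
apply: triple_eq.
- by rewrite mulrAC -h1; field.
- by rewrite mulrAC -h2; field.
- by rewrite mulrAC -h3; field.
Qed.

Lemma mk_eq_cross (a b : vec3 F) : a != vz -> b != vz ->
  cross F a b = vz -> mk F a = mk F b.
Proof.
case: a => [[a1 a2] a3]; case: b => [[b1 b2] b3] /=.
move=> a0 b0 /eqP; rewrite !xpair_eqE => /andP [/andP [/eqP e1 /eqP e2] /eqP e3].
have e1' : a2 * b3 = a3 * b2 by apply/eqP; rewrite -subr_eq0 e1.
have e2' : a3 * b1 = a1 * b3 by apply/eqP; rewrite -subr_eq0 e2.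
have e3' : a1 * b2 = a2 * b1 by apply/eqP; rewrite -subr_eq0 e3.
case: (eqVneq a1 0) => [z1|n1].
  case: (eqVneq a2 0) => [z2|n2].
    have n3 : a3 != 0 by move: a0; rewrite z1 z2 !xpair_eqE !eqxx.
    have [bn ->] := @scale_of a3 b3 a1 a2 a3 b1 b2 b3 n3 (etrans e2' (mulrC _ _)) (etrans (esym e1') (mulrC _ _)) (mulrC _ _) b0.
    by rewrite mk_scale // mulf_eq0 invr_eq0 negb_or bn.
  have [bn ->] := @scale_of a2 b2 a1 a2 a3 b1 b2 b3 n2 (etrans (esym e3') (mulrC _ _)) (mulrC _ _) (etrans e1' (mulrC _ _)) b0.
  by rewrite mk_scale // mulf_eq0 invr_eq0 negb_or bn.
have [bn ->] := @scale_of a1 b1 a1 a2 a3 b1 b2 b3 n1 (mulrC _ _) (etrans e3' (mulrC _ _)) (etrans (esym e2') (mulrC _ _)) b0.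
by rewrite mk_scale // mulf_eq0 invr_eq0 negb_or bn.
Qed.

Lemma scale_eq0 c (v : vec3 F) : c != 0 -> scale c v = vz -> v = vz.
Proof.
move=> c0 /(congr1 (scale c^-1)); case: v => [[x y] z] /= /eqP.
rewrite !xpair_eqE !mulr0 !mulrA !mulVf // !mul1r => /andP [/andP [/eqP -> /eqP ->] /eqP ->].
by [].
Qed.

Lemma cross_eq_mk (a b : vec3 F) : a != vz -> b != vz ->
  mk F a = mk F b -> cross F a b = vz.
Proof.
move=> a0 b0 e.
have [c c0 ea] := val_mk_lin a0; have [d d0 eb] := val_mk_lin b0.
have : scale c a = scale d b by rewrite -ea -eb e.
move=> ecd; apply: (@scale_eq0 (c * d)); first by rewrite mulf_eq0 negb_or c0.
rewrite -cross_scale ecd; case: (scale d b) => [[x y] z] /=.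
by apply: triple_eq; ring.
Qed.

Lemma inc_mk (a b : vec3 F) : a != vz -> b != vz ->
  inc F (mk F a) (mk F b) = (dot F a b == 0).
Proof.
move=> a0 b0; have [c c0 ea] := val_mk_lin a0; have [d d0 eb] := val_mk_lin b0.
by rewrite /inc ea eb dot_scale !mulf_eq0 (negbTE c0) (negbTE d0).
Qed.

Lemma join_mk (a b : vec3 F) : a != vz -> b != vz ->
  join F (mk F a) (mk F b) = mk F (cross F a b).
Proof.
move=> a0 b0; have [c c0 ea] := val_mk_lin a0; have [d d0 eb] := val_mk_lin b0.
by rewrite /join ea eb cross_scale mk_scale // mulf_eq0 negb_or c0.
Qed.

Lemma meet_mk (a b : vec3 F) : a != vz -> b != vz ->
  meet F (mk F a) (mk F b) = mk F (cross F a b).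
Proof. exact: join_mk. Qed.

Lemma pT_mk : pT F = mk F (0, 0, 1).
Proof. by rewrite -[pT F]mk_val. Qed.

Lemma mT_mk : mT F = mk F (0, 0, 1).
Proof. by rewrite -[mT F]mk_val. Qed.

Lemma e3_nz : ((0, 0, 1) : vec3 F) != vz.
Proof. by apply: nz3; rewrite oner_eq0. Qed.

Lemma line_through (lv a b : vec3 F) : lv != vz -> cross F a b != vz ->
  dot F a lv = 0 -> dot F b lv = 0 -> mk F lv = mk F (cross F a b).
Proof.
move=> l0 c0 ha hb; apply: mk_eq_cross => //.
move: ha hb; case: lv {l0} => [[l1 l2] l3]; case: a {c0} => [[a1 a2] a3];
  case: b => [[b1 b2] b3] /= ha hb.
have E : forall (u v w : F), u = 0 -> v = 0 -> w = 0 -> ((u, v, w) : vec3 F) = vz.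
  by move=> u v w -> -> ->.
apply: E.
- have -> : l2 * (a1 * b2 - a2 * b1) - l3 * (a3 * b1 - a1 * b3) =
     a1 * (l1 * b1 + l2 * b2 + l3 * b3) - b1 * (l1 * a1 + l2 * a2 + l3 * a3) by ring.
  by rewrite ha hb !mulr0 subrr.
- have -> : l3 * (a2 * b3 - a3 * b2) - l1 * (a1 * b2 - a2 * b1) =
     a2 * (l1 * b1 + l2 * b2 + l3 * b3) - b2 * (l1 * a1 + l2 * a2 + l3 * a3) by ring.
  by rewrite ha hb !mulr0 subrr.
- have -> : l1 * (a3 * b1 - a1 * b3) - l2 * (a2 * b3 - a3 * b2) =
     a3 * (l1 * b1 + l2 * b2 + l3 * b3) - b3 * (l1 * a1 + l2 * a2 + l3 * a3) by ring.
  by rewrite ha hb !mulr0 subrr.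
Qed.

Definition det (a b c : vec3 F) := dot F c (cross F a b).

Lemma col_det (a b c : vec3 F) : a != vz -> b != vz -> c != vz ->
  cross F a b != vz -> det a b c = 0 -> collinear F (mk F a) (mk F b) (mk F c).
Proof.
move=> a0 b0 c0 x0 d0; apply/existsP; exists (mk F (cross F a b)).
rewrite !inc_mk // (d0 : dot F c (cross F a b) = 0) eqxx andbT.
case: a {a0 x0 d0} => [[a1 a2] a3]; case: b {b0} => [[b1 b2] b3] /=.
by apply/andP; split; apply/eqP; ring.
Qed.

Lemma ncol_det (a b c : vec3 F) : a != vz -> b != vz -> c != vz ->
  det a b c != 0 -> ~~ collinear F (mk F a) (mk F b) (mk F c).
Proof.
move=> a0 b0 c0 d0; apply/existsP => [[l /and3P [ha hb hc]]].
move: ha hb hc; rewrite -[l]mk_val !inc_mk ?val_nz //.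
have := val_nz l; move: d0; rewrite /det.
case: (val l) => [[l1 l2] l3]; case: a {a0} => [[a1 a2] a3];
  case: b {b0} => [[b1 b2] b3]; case: c {c0} => [[c1 c2] c3] /=.
set D := (_ + _ + _) => D0 l0 /eqP ha /eqP hb /eqP hc.
have E1 : D * l1 = (l1 * a1 + l2 * a2 + l3 * a3) * (b2 * c3 - b3 * c2)
   + (l1 * b1 + l2 * b2 + l3 * b3) * (c2 * a3 - c3 * a2)
   + (l1 * c1 + l2 * c2 + l3 * c3) * (a2 * b3 - a3 * b2) by rewrite /D; ring.
have E2 : D * l2 = (l1 * a1 + l2 * a2 + l3 * a3) * (b3 * c1 - b1 * c3)
   + (l1 * b1 + l2 * b2 + l3 * b3) * (c3 * a1 - c1 * a3)
   + (l1 * c1 + l2 * c2 + l3 * c3) * (a3 * b1 - a1 * b3) by rewrite /D; ring.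
have E3 : D * l3 = (l1 * a1 + l2 * a2 + l3 * a3) * (b1 * c2 - b2 * c1)
   + (l1 * b1 + l2 * b2 + l3 * b3) * (c1 * a2 - c2 * a1)
   + (l1 * c1 + l2 * c2 + l3 * c3) * (a1 * b2 - a2 * b1) by rewrite /D; ring.
move: E1 E2 E3; rewrite ha hb hc !mul0r !addr0.
move=> /eqP; rewrite mulf_eq0 (negbTE D0) /= => /eqP z1.
move=> /eqP; rewrite mulf_eq0 (negbTE D0) /= => /eqP z2.
move=> /eqP; rewrite mulf_eq0 (negbTE D0) /= => /eqP z3.
by move: l0; rewrite z1 z2 z3 eqxx.
Qed.

Lemma concurrent_collinear (l m n : proj F) :
  concurrent F l m n = collinear F l m n.
Proof.
rewrite /concurrent /collinear; apply: eq_existsb => X.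
by rewrite /inc !(dotC (val X)).
Qed.

End Basic.


Section Frob.
Variable F : finFieldType.
Variable q : nat.
Hypothesis hq2 : (1 < q)%N.
Hypothesis frD : forall x y : F, (x + y) ^+ q = x ^+ q + y ^+ q.
Hypothesis fr3 : forall x : F, x ^+ q ^+ q ^+ q = x.

Notation vz := ((0, 0, 0) : vec3 F).

Lemma fr0 : (0 : F) ^+ q = 0.
Proof. by rewrite expr0n; case: q hq2. Qed.
Lemma fr1 : (1 : F) ^+ q = 1.
Proof. exact: expr1n. Qed.
Lemma frN (x : F) : (- x) ^+ q = - x ^+ q.
Proof. by apply/eqP; rewrite -subr_eq0 opprK -frD addNr fr0. Qed.
Lemma frB (x y : F) : (x - y) ^+ q = x ^+ q - y ^+ q.
Proof. by rewrite frD frN. Qed.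
Lemma frM (x y : F) : (x * y) ^+ q = x ^+ q * y ^+ q.
Proof. exact: exprMn. Qed.
Lemma fr_eq0 (x : F) : (x ^+ q == 0) = (x == 0).
Proof. by rewrite expf_eq0; case: q hq2. Qed.
Lemma frV (x : F) : (x ^-1) ^+ q = (x ^+ q) ^-1.
Proof. by rewrite exprVn. Qed.
Lemma fr_nz (x : F) : x != 0 -> x ^+ q != 0.
Proof. by rewrite fr_eq0. Qed.

Lemma phiv_scale c (v : vec3 F) :
  phiv F q (scale c v) = scale (c ^+ q) (phiv F q v).
Proof. by case: v => [[x y] z] /=; rewrite !frM. Qed.

Lemma phiv_nz (v : vec3 F) : v != vz -> phiv F q v != vz.
Proof.
case: v => [[x y] z] /=; rewrite !xpair_eqE !fr_eq0.
by case: (x == 0); case: (y == 0); case: (z == 0).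
Qed.

Lemma phi_mk (v : vec3 F) : v != vz -> phi_pt F q (mk F v) = mk F (phiv F q v).
Proof.
move=> v0; have [c c0 e] := val_mk_lin v0.
by rewrite /phi_pt e phiv_scale mk_scale // fr_nz.
Qed.

Lemma phiL_mk (v : vec3 F) : v != vz -> phi_line F q (mk F v) = mk F (phiv F q v).
Proof. exact: phi_mk. Qed.

Lemma typeS (th x : F) : th * th = 1 -> th ^+ q = th -> x != 0 ->
  (1 + th = 0 -> typeII_pt F q (mk F (x * th, x ^+ q, 0))) /\
  (1 + th != 0 -> typeIII_pt F q (mk F (x * th, x ^+ q, 0))).
Proof.
move=> hth frth x0.
have th0 : th != 0 by apply/negP => /eqP t0; move: hth; rewrite t0 mul0r => /eqP; rewrite eq_sym oner_eq0.
have X1 := fr_nz x0; have X2 := fr_nz X1.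
have v0 : ((x * th, x ^+ q, 0) : vec3 F) != vz by apply: nz2.
have v1 := phiv_nz v0; have v2 := phiv_nz v1.
rewrite /typeII_pt /typeIII_pt !phi_mk //.
have D : det (x * th, x ^+ q, 0) (phiv F q (x * th, x ^+ q, 0))
   (phiv F q (phiv F q (x * th, x ^+ q, 0))) = x * x ^+ q * x ^+ q ^+ q * (1 + th).
  rewrite /det /= !(frM, fr0, frth, fr3).
  transitivity (x * x ^+ q * x ^+ q ^+ q * (1 + th * th * th)); first by ring.
  by rewrite hth mul1r.
split => hc.
- apply/andP; split.
    apply/negP => /eqP /(cross_eq_mk v1 v0); rewrite /= !(frM, fr0, frth) => [[e1 _ _]].
    by move/eqP: e1; rewrite mulr0 sub0r oppr_eq0 mulf_eq0 (negbTE X1) (negbTE X2).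
  apply: col_det => //.
    by rewrite /= !(frM, fr0, frth); apply: nz1; rewrite mul0r subr0 mulf_neq0.
  by rewrite D hc mulr0.
- by apply: ncol_det => //; rewrite D !mulf_neq0.
Qed.

Lemma join_pT_mk (v : vec3 F) : v != vz ->
  join F (pT F) (mk F v) = mk F (cross F (0, 0, 1) v).
Proof. by move=> v0; rewrite pT_mk join_mk // e3_nz. Qed.

Lemma meet_mT_mk (v : vec3 F) : v != vz ->
  meet F (mk F v) (mT F) = mk F (cross F v (0, 0, 1)).
Proof. by move=> v0; rewrite mT_mk meet_mk // e3_nz. Qed.

Lemma typeTS (th x : F) : th * th = 1 -> th ^+ q = th -> x != 0 ->
  (th = 1 -> typeII_line F q (join F (pT F) (mk F (x * th, x ^+ q, 0)))) /\
  (th - 1 != 0 -> typeIII_line F q (join F (pT F) (mk F (x * th, x ^+ q, 0)))).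
Proof.
move=> hth frth x0.
have th0 : th != 0 by apply/negP => /eqP t0; move: hth; rewrite t0 mul0r => /eqP; rewrite eq_sym oner_eq0.
have X1 := fr_nz x0; have X2 := fr_nz X1.
have v0 : ((x * th, x ^+ q, 0) : vec3 F) != vz by apply: nz2.
rewrite join_pT_mk //.
have -> : cross F (0, 0, 1) (x * th, x ^+ q, 0) = (- x ^+ q, x * th, 0).
  by rewrite /=; apply: triple_eq; ring.
have w0 : ((- x ^+ q, x * th, 0) : vec3 F) != vz by apply: nz1; rewrite oppr_eq0.
have w1 := phiv_nz w0; have w2 := phiv_nz w1.
rewrite /typeII_line /typeIII_line !concurrent_collinear !phiL_mk //.
have D : det (- x ^+ q, x * th, 0) (phiv F q (- x ^+ q, x * th, 0))
   (phiv F q (phiv F q (- x ^+ q, x * th, 0))) = x * x ^+ q * x ^+ q ^+ q * (th - 1).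
  rewrite /det /= !(frM, fr0, frth, fr3, frN).
  transitivity (x * x ^+ q * x ^+ q ^+ q * (th * th * th - 1)); first by ring.
  by rewrite hth mul1r.
split => hc.
- apply/andP; split.
    apply/negP => /eqP /(cross_eq_mk w1 w0); rewrite /= !(frM, fr0, frth, frN) => [[_ _ e3]].
    move/eqP: e3; rewrite mul0r sub0r oppr_eq0 mulNr mulrN opprK.
    by rewrite mulf_eq0 (negbTE X1) (negbTE X2).
  apply: col_det => //.
    by rewrite /= !(frM, fr0, frth, frN); apply: nz3; rewrite mulr0 subr0 mulNr mulrN opprK mulf_neq0.
  by rewrite D hc subrr mulr0.
- by apply: ncol_det => //; rewrite D !mulf_neq0.
Qed.

End Frob.


Section Count.
Variable F : finFieldType.
Variable q : nat.
Hypothesis hq2 : (1 < q)%N.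
Hypothesis frD : forall x y : F, (x + y) ^+ q = x ^+ q + y ^+ q.
Hypothesis fr3 : forall x : F, x ^+ q ^+ q ^+ q = x.
Hypothesis hcard : #|F| = (q ^ 3)%N.

Definition tr (z : F) := z + z ^+ q + z ^+ q ^+ q.
Definition Kset := [set z : F | z ^+ q == z].
Definition Kerset := [set z : F | tr z == 0].

Lemma card_roots (p : {poly F}) : p != 0 -> (#|[set z | root p z]| < size p)%N.
Proof.
move=> p0; rewrite cardE; apply: max_poly_roots => //; last exact: enum_uniq.
by apply/allP => z; rewrite mem_enum inE.
Qed.

Lemma card_K_le : (#|Kset| <= q)%N.
Proof.
have sz : size ('X^q - 'X : {poly F}) = q.+1.
  by rewrite size_addl ?size_polyXn // size_opp size_polyX.
have p0 : ('X^q - 'X : {poly F}) != 0 by rewrite -size_poly_eq0 sz.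
rewrite -ltnS -sz; apply: leq_ltn_trans (card_roots p0).
apply: subset_leq_card; apply/subsetP => z; rewrite !inE /root !hornerE.
by rewrite subr_eq0.
Qed.

Lemma card_Ker_le : (#|Kerset| <= q * q)%N.
Proof.
have sz1 : size ('X^q + 'X : {poly F}) = q.+1.
  by rewrite size_addl ?size_polyXn // size_polyX.
have sz : size ('X^(q * q) + ('X^q + 'X) : {poly F}) = (q * q).+1.
  rewrite size_addl ?size_polyXn // sz1 ltnS.
  by rewrite -{1}[q]muln1 ltn_mul2l ltnW.
have p0 : ('X^(q * q) + ('X^q + 'X) : {poly F}) != 0 by rewrite -size_poly_eq0 sz.
rewrite -ltnS -sz; apply: leq_ltn_trans (card_roots p0).
apply: subset_leq_card; apply/subsetP => z; rewrite !inE /root !(hornerD, hornerXn, hornerX) /tr.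
by rewrite exprM; move/eqP=> h; apply/eqP; rewrite -h; ring.
Qed.

Lemma trD (x y : F) : tr (x + y) = tr x + tr y.
Proof. rewrite /tr !frD; ring. Qed.

Lemma trB (x y : F) : tr (x - y) = tr x - tr y.
Proof. by rewrite /tr !(frD, frN hq2 frD); ring. Qed.

Lemma tr_fix (x : F) : tr x ^+ q = tr x.
Proof. rewrite /tr !frD fr3; ring. Qed.

Lemma card_K_Ker : (#|Kset| = q /\ #|Kerset| = q * q)%N.
Proof.
pose g (z : F) := odflt 0 [pick y | tr y == z].
have gP y : tr (g (tr y)) = tr y.
  rewrite /g; case: pickP => [y0 /eqP // | /(_ y)]; by rewrite eqxx.
pose h (y : F) := (y - g (tr y), tr y).
have hinj : injective h.
  move=> y1 y2 [e1 e2]; move: e1; rewrite e2 => /eqP; rewrite -subr_eq0.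
  by rewrite opprB addrA subrK subr_eq0 => /eqP.
have sub : h @: [set: F] \subset setX Kerset Kset.
  apply/subsetP => w /imsetP [y _ ->]; rewrite !inE /= tr_fix eqxx andbT.
  by rewrite trB gP subrr.
have := subset_leq_card sub; rewrite card_imset // cardsT cardsX hcard.
have := card_K_le; have := card_Ker_le.
move: #|Kset| #|Kerset| => a b hb ha hab.
have q0 : (0 < q)%N by apply: ltnW.
nia.
Qed.


Definition nzset := [set x : F | x != 0].
Definition Wset (u : F) := [set y : F | (y != 0) && (tr (u * y) == 0)].
Definition Kstar := [set z : F | (z != 0) && (z ^+ q == z)].

Lemma tr0 : tr 0 = 0.
Proof. by rewrite /tr !fr0 // !addr0. Qed.

Lemma card_W u : u != 0 -> #|Wset u| = (q * q - 1)%N.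
Proof.
move=> u0; set A := [set y : F | tr (u * y) == 0].
have eA : Kerset = [set u * y | y in A].
  apply/setP => z; rewrite inE; apply/idP/imsetP => [hz|[y]].
    by exists (u^-1 * z); rewrite ?inE mulrA mulfV // mul1r.
  by rewrite inE => hy ->.
have cA : #|A| = (q * q)%N.
  by have [_ <-] := card_K_Ker; rewrite eA card_imset //; apply: mulfI.
have := cardsD1 (0 : F) A.
rewrite cA inE mulr0 tr0 eqxx /= => ->; rewrite add1n subn1 /=.
by apply: eq_card => y; rewrite !inE.
Qed.

Lemma card_Kstar : #|Kstar| = (q - 1)%N.
Proof.
have [<- _] := card_K_Ker.
rewrite (cardsD1 0 Kset) inE fr0 // eqxx add1n subn1 /=.
by apply: eq_card => y; rewrite !inE.
Qed.

Variable s : F.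
Hypothesis hs : s * s = 1.
Hypothesis frs : s ^+ q = s.

Lemma s_nz : s != 0.
Proof. by apply/negP => /eqP t0; move: hs; rewrite t0 mul0r => /eqP; rewrite eq_sym oner_eq0. Qed.

Definition fB (r : F) := mk F (r, r ^+ q, s * r ^+ q ^+ q).
Definition Bs := [set fB r | r in nzset].
Definition Ls := [set mk F (s * u, s * u ^+ q, u ^+ q ^+ q) | u in nzset].

Lemma fB_nz r : r != 0 -> ((r, r ^+ q, s * r ^+ q ^+ q) : vec3 F) != (0, 0, 0).
Proof. exact: nz1. Qed.

Lemma fiber u y : u != 0 -> y \in Wset u ->
  [set y' in Wset u | fB y' == fB y] = [set l * y | l in Kstar].
Proof.
move=> u0; rewrite inE => /andP [y0 hy]; apply/setP => y'; rewrite inE.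
apply/andP/imsetP => [[hy' /eqP e]|[l]].
  move: hy'; rewrite inE => /andP [y'0 _].
  move: (cross_eq_mk (fB_nz y'0) (fB_nz y0) e) => [_ _ e3].
  have e3' : y' * y ^+ q = y' ^+ q * y by apply/eqP; rewrite -subr_eq0 e3.
  exists (y' / y); last by rewrite mulfVK.
  rewrite inE mulf_neq0 ?invr_eq0 //= frM frV.
  by rewrite eqr_div ?fr_nz // e3'.
rewrite inE => /andP [l0 /eqP fl] ->.
split.
  rewrite !inE mulf_neq0 //=.
  have -> : tr (u * (l * y)) = l * tr (u * y) by rewrite /tr !(frM, fl); ring.
  by rewrite (eqP hy) mulr0.
apply/eqP; rewrite /fB; apply: (@mk_eq_scale _ l); first by [].
by rewrite /= !(frM, fl); apply: triple_eq; ring.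
Qed.

Lemma card_img u : u != 0 -> #|fB @: Wset u| = q.+1.
Proof.
move=> u0.
have H : #|Wset u| = (#|fB @: Wset u| * (q - 1))%N.
  rewrite -sum1_card (partition_big fB (mem (fB @: Wset u))); last first.
    by move=> y hy; apply: imset_f.
  rewrite -sum_nat_const; apply: eq_bigr => P /imsetP [y hy ->].
  have y0 : y != 0 by move: hy; rewrite inE => /andP [].
  rewrite sum1dep_card -card_Kstar.
  transitivity #|[set l * y | l in Kstar]|; last by rewrite card_imset //; apply: mulIf.
  rewrite -(fiber u0 hy).
  by apply: eq_card => y'; rewrite !inE.
move: H; rewrite card_W //; move: #|_| => n.
have q0 : (1 < q)%N by [].
nia.
Qed.


Lemma dot_fB r u : dot F (r, r ^+ q, s * r ^+ q ^+ q) (s * u, s * u ^+ q, u ^+ q ^+ q)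
  = s * tr (u * r).
Proof. by rewrite /= /tr !frM; ring. Qed.

Lemma points_on u : u != 0 ->
  [set P in Bs | inc F P (mk F (s * u, s * u ^+ q, u ^+ q ^+ q))] = fB @: Wset u.
Proof.
move=> u0; have l0 : ((s * u, s * u ^+ q, u ^+ q ^+ q) : vec3 F) != (0, 0, 0).
  by apply: nz1; rewrite mulf_neq0 // s_nz.
apply/setP => P; rewrite inE; apply/andP/imsetP.
  move=> [/imsetP [r]]; rewrite inE => r0 -> hi; exists r => //.
  move: hi; rewrite /fB inc_mk ?fB_nz // dot_fB mulf_eq0 (negbTE s_nz) /=.
  by rewrite inE r0.
move=> [y]; rewrite inE => /andP [y0 hy] ->; split.
  by apply: imset_f; rewrite inE.
by rewrite /fB inc_mk ?fB_nz // dot_fB (eqP hy) mulr0.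
Qed.

Lemma lines_Bs : lines_of F q Bs = Ls.
Proof.
apply/setP => l; rewrite inE; apply/idP/imsetP.
  move=> /eqP hc; have : (1 < #|[set P in Bs | inc F P l]|)%N by rewrite hc ltnS ltnW.
  move=> /card_gt1P [P [Q [hP hQ PQ]]].
  move: hP hQ PQ; rewrite !inE => /andP [hP hx] /andP [hQ hy] nxy.
  case/imsetP: hP hx nxy => x; rewrite inE => x0 -> hx nxy.
  case/imsetP: hQ hy nxy => y; rewrite inE => y0 -> hy nxy.
  have cnz : cross F (x, x ^+ q, s * x ^+ q ^+ q) (y, y ^+ q, s * y ^+ q ^+ q) != (0, 0, 0).
    apply/negP => /eqP /(mk_eq_cross (fB_nz x0) (fB_nz y0)) e.
    by rewrite /fB e eqxx in nxy.
  move: hx hy; rewrite -[l]mk_val /fB !inc_mk ?fB_nz ?val_nz // => /eqP hx /eqP hy.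
  have el := line_through (val_nz l) cnz hx hy.
  set u := x ^+ q * y ^+ q ^+ q - x ^+ q ^+ q * y ^+ q.
  have ec : cross F (x, x ^+ q, s * x ^+ q ^+ q) (y, y ^+ q, s * y ^+ q ^+ q)
     = (s * u, s * u ^+ q, u ^+ q ^+ q).
    by rewrite /u /= !(frB hq2 frD, frM, fr3); apply: triple_eq; ring.
  exists u; last by rewrite el ec.
  rewrite inE; apply/negP => /eqP u0; move: cnz; rewrite ec u0 mulr0 !fr0 //.
  by rewrite mulr0 eqxx.
move=> [u]; rewrite inE => u0 ->.
by rewrite points_on // card_img.
Qed.

End Count.


Section Sets.
Variable F : finFieldType.
Variable q : nat.
Hypothesis hq2 : (1 < q)%N.
Hypothesis frD : forall x y : F, (x + y) ^+ q = x ^+ q + y ^+ q.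
Hypothesis fr3 : forall x : F, x ^+ q ^+ q ^+ q = x.
Hypothesis hcard : #|F| = (q ^ 3)%N.

Notation vz := ((0, 0, 0) : vec3 F).
Let frN' x := @frN F q hq2 frD x.
Let fr0' := @fr0 F q hq2.
Let frV' x := @frV F q x.
Let frM' x y := @frM F q x y.
Let fr1' := @fr1 F q.
Let fr_nz' x := @fr_nz F q hq2 x.

Lemma reindex (f1 f2 : F -> proj F) (g : F -> F) :
  (forall x, x != 0 -> g x != 0) -> (forall x, x != 0 -> g (g x) = x) ->
  (forall x, x != 0 -> f1 x = f2 (g x)) ->
  [set f1 x | x in [set x : F | x != 0]] = [set f2 x | x in [set x : F | x != 0]].
Proof.
move=> gnz gg e; apply/setP => P; apply/imsetP/imsetP => [[x]|[y]].
  by rewrite inE => x0 ->; exists (g x); rewrite ?inE ?gnz ?e.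
rewrite inE => y0 ->; exists (g y); rewrite ?inE ?gnz // e ?gg ?gnz //.
Qed.

Lemma Pr_Bs s : Pr F (Bs q s) = Sth F q 1.
Proof.
rewrite /Pr /Bs /Sth -imset_comp; apply: eq_in_imset => r; rewrite inE => r0 /=.
rewrite /fB join_pT_mk ?nz1 // meet_mT_mk; last by apply: nz2; rewrite /= mul0r subr0 mul1r.
by congr (mk F _); rewrite /=; apply: triple_eq; ring.
Qed.

Lemma E' (s a b : F) : s * s = 1 -> a * (s * s) = b -> a = b.
Proof. by move=> hs <-; rewrite hs mulr1. Qed.

Lemma Sp_Bs s : s * s = 1 -> s ^+ q = s -> Sp F q (Bs q s) = Sth F q (-1).
Proof.
move=> hs frs; have s0 : s != 0.
  by apply/negP => /eqP t0; move: hs; rewrite t0 mul0r => /eqP; rewrite eq_sym oner_eq0.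
rewrite /Sp (lines_Bs hq2 frD fr3 hcard hs) /SpL /Ls -imset_comp.
symmetry; apply: (@reindex _ _ (fun x => - x^-1)).
- by move=> x x0; rewrite oppr_eq0 invr_eq0.
- by move=> x x0; rewrite invrN invrK opprK.
move=> x x0 /=; rewrite meet_mT_mk; last by apply: nz1; rewrite mulf_neq0 // oppr_eq0 invr_eq0.
have X1 := fr_nz' x0; have X2 := fr_nz' X1.
apply: (@mk_eq_scale _ (s * x * x ^+ q)); first by rewrite !mulf_neq0.
rewrite /= !(frN', frV'); apply: triple_eq.
- by apply: (E' hs); field; rewrite ?x0 ?X1 ?X2 ?s0.
- by apply: (E' hs); field; rewrite ?x0 ?X1 ?X2 ?s0.
- by ring.
Qed.


Lemma mu_line_Bs : (2%:R : F) != 0 -> mu_line_set F q (Bs q (-1)) = Sth F q 1.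
Proof.
move=> h2; have hs : (-1 : F) * -1 = 1 by rewrite mulrNN mulr1.
rewrite /mu_line_set (lines_Bs hq2 frD fr3 hcard hs) /Ls -imset_comp.
symmetry; apply: (@reindex _ _ (fun x => x^-1)).
- by move=> x x0; rewrite invr_eq0.
- by move=> x x0; rewrite invrK.
move=> x x0 /=.
have X1 := fr_nz' x0; have X2 := fr_nz' X1.
set w := ((-1 * x^-1, -1 * x^-1 ^+ q, x^-1 ^+ q ^+ q) : vec3 F).
have w0 : w != vz by apply: nz1; rewrite mulN1r oppr_eq0 invr_eq0.
have w1 := phiv_nz hq2 w0; have w2 := phiv_nz hq2 w1.
rewrite /mu_line !(phiL_mk hq2) // meet_mk //.
apply: (@mk_eq_scale _ (x * x ^+ q * x ^+ q ^+ q / 2%:R)); first by rewrite !mulf_neq0 // invr_eq0.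
rewrite /w /= !(frM', frN', frV', fr1', fr3); apply: triple_eq.
- by field; rewrite ?x0 ?X1 ?X2 ?h2.
- by field; rewrite ?x0 ?X1 ?X2 ?h2.
- by ring.
Qed.

Lemma SpL_mu_pt_Bs : (2%:R : F) != 0 ->
  SpL F (mu_pt_set F q (Bs q (-1))) = Sth F q (-1).
Proof.
move=> h2.
rewrite /SpL /mu_pt_set /Bs -!imset_comp.
symmetry; apply: (@reindex _ _ (fun x => - x)).
- by move=> x x0; rewrite oppr_eq0.
- by move=> x x0; rewrite opprK.
move=> x x0 /=.
have X1 := fr_nz' x0; have X2 := fr_nz' X1.
have mx0 : - x != 0 by rewrite oppr_eq0.
rewrite /fB /mu_pt.
set a := ((- x, (- x) ^+ q, -1 * (- x) ^+ q ^+ q) : vec3 F).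
have a0 : a != vz by apply: nz1.
have a1 := phiv_nz hq2 a0; have a2 := phiv_nz hq2 a1.
rewrite !(phi_mk hq2) // join_mk //.
have c0 : cross F (phiv F q a) (phiv F q (phiv F q a)) != vz.
  rewrite /a /= !(frM', frN', frV', fr1', fr3); apply: nz1; apply/eqP => h.
  have : 2%:R * (x ^+ q * x ^+ q ^+ q) = 0 by rewrite -h; ring.
  by apply/eqP; rewrite !mulf_neq0.
rewrite meet_mT_mk //.
apply: (@mk_eq_scale _ (- (2%:R * x ^+ q ^+ q)^-1)); first by rewrite oppr_eq0 invr_eq0 !mulf_neq0.
rewrite /a /= !(frM', frN', frV', fr1', fr3); apply: triple_eq.
- by field; rewrite ?x0 ?X1 ?X2 ?h2.
- by field; rewrite ?x0 ?X1 ?X2 ?h2.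
- by ring.
Qed.

End Sets.

Unset Implicit Arguments. Set Strict Implicit.

Theorem corollary5p2 (F : finFieldType) (p k q : nat)
  (hp : prime p) (hk : (0 < k)%N) (hq : q = (p ^ k)%N)
  (hF : #|F| = (q ^ 3)%N) :
  (~~ odd q ->
     (forall P, P \in Sth F q (1 : F) -> typeII_pt F q P) /\
     (forall l, l \in TS F q (1 : F) -> typeII_line F q l) /\
     Sth F q (1 : F) = Pr F (P2q F q) /\ Sth F q (1 : F) = Sp F q (P2q F q)) /\
  (odd q ->
     ((forall P, P \in Sth F q (1 : F) -> typeIII_pt F q P) /\
      (forall l, l \in TS F q (1 : F) -> typeII_line F q l) /\
      Sth F q (1 : F) = mu_line_set F q (Pith F q (-1 : F)) /\
      Sth F q (1 : F) = Pr F (P2q F q) /\ Sth F q (1 : F) = Pr F (Pith F q (-1 : F))) /\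
     ((forall P, P \in Sth F q (-1 : F) -> typeII_pt F q P) /\
      (forall l, l \in TS F q (-1 : F) -> typeIII_line F q l) /\
      Sth F q (-1 : F) = SpL F (mu_pt_set F q (Pith F q (-1 : F))) /\
      Sth F q (-1 : F) = Sp F q (P2q F q) /\ Sth F q (-1 : F) = Sp F q (Pith F q (-1 : F)))).
Proof.
have pch : p \in [pchar F].
  by apply: (@card_finPcharP _ _ (k * 3)) => //; rewrite hF hq expnM.
have hq2 : (1 < q)%N.
  rewrite hq; apply: leq_trans (prime_gt1 hp) _.
  by rewrite -{1}(expn1 p) leq_pexp2l // prime_gt0.
have frD : forall x y : F, (x + y) ^+ q = x ^+ q + y ^+ q.
  move=> x y; apply: exprDn_pchar.
  by rewrite (eq_pnat _ (pcharf_eq pch)) hq pnatX pnat_id.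
have fr3 : forall x : F, x ^+ q ^+ q ^+ q = x.
  have e : (q * q * q = #|F|)%N by rewrite hF !expnS expn0 muln1 mulnA.
  by move=> x; rewrite -!exprM mulnA e expf_card.
have eq2 : (q ^ 2 = q * q)%N by rewrite !expnS expn0 muln1.
have eP2q : P2q F q = Bs q 1.
  rewrite /P2q /Bs; apply: eq_imset => x; rewrite /fB mul1r.
  by rewrite eq2 exprM.
have ePith : odd q -> Pith F q (-1) = Bs q (-1).
  move=> oq; rewrite /Pith /Bs; apply: eq_imset => x; rewrite /fB.
  by rewrite -signr_odd /= oq /= expr0 mulr1 mulrC eq2 exprM.
have e2 : (1 + 1 : F) = 2%:R by rewrite mulr2n.
have frm1 : (-1 : F) ^+ q = -1 by rewrite (frN hq2 frD) expr1n.
have hm1 : (-1 : F) * -1 = 1 by rewrite mulrNN mulr1.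
have h11 : (1 : F) * 1 = 1 by rewrite mulr1.
have fr1 : (1 : F) ^+ q = 1 by rewrite expr1n.
split.
- move=> ev.
  have p2 : p = 2%N.
    case: (even_prime hp) => // op; move: ev; rewrite hq oddX op orbT.
    by case: (k) hk.
  have h2 : (2%:R : F) = 0 by rewrite -p2; apply: pcharf0.
  have m1 : (-1 : F) = 1 by apply: (addIr 1); rewrite addNr e2 h2.
  split.
    move=> P /imsetP [x]; rewrite inE => x0 ->.
    by case: (typeS hq2 fr3 h11 fr1 x0) => + _; apply; rewrite e2 h2.
  split.
    move=> l /imsetP [X /imsetP [x]]; rewrite inE => x0 -> ->.
    by case: (typeTS hq2 frD fr3 h11 fr1 x0) => + _; apply.
  split; first by rewrite eP2q Pr_Bs.
  by rewrite eP2q (Sp_Bs hq2 frD fr3 hF h11 fr1) m1.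
- move=> od.
  have h2 : (2%:R : F) != 0.
    rewrite -(dvdn_pcharf pch); apply/negP => /(dvdn_leq (isT : (0 < 2)%N)) => hp2.
    have p2 : p = 2%N by move: (prime_gt1 hp) hp2; lia.
    by move: od; rewrite hq oddX p2 orbF; case: (k) hk.
  split.
    split.
      move=> P /imsetP [x]; rewrite inE => x0 ->.
      by case: (typeS hq2 fr3 h11 fr1 x0) => _; apply; rewrite e2 h2.
    split.
      move=> l /imsetP [X /imsetP [x]]; rewrite inE => x0 -> ->.
      by case: (typeTS hq2 frD fr3 h11 fr1 x0) => + _; apply.
    split; first by rewrite (ePith od) (mu_line_Bs hq2 frD fr3 hF h2).
    split; first by rewrite eP2q Pr_Bs.
    by rewrite (ePith od) Pr_Bs.
  split.
    move=> P /imsetP [x]; rewrite inE => x0 ->.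
    by case: (typeS hq2 fr3 hm1 frm1 x0) => + _; apply; rewrite addrN.
  split.
    move=> l /imsetP [X /imsetP [x]]; rewrite inE => x0 -> ->.
    by case: (typeTS hq2 frD fr3 hm1 frm1 x0) => _; apply; rewrite -opprD oppr_eq0 e2.
  split; first by rewrite (ePith od) (SpL_mu_pt_Bs hq2 frD fr3 h2).
  split; first by rewrite eP2q (Sp_Bs hq2 frD fr3 hF h11 fr1).
  by rewrite (ePith od) (Sp_Bs hq2 frD fr3 hF hm1 frm1).
Qed.
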